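(* Let $V$ be a finite-dimensional irreducible $T$-module. Then (i) there exist nonnegative integers $r,\delta$ with $r+\delta\le d$ such that for $0\le i\le d$, $e^*_iV\ne0$ if and only if $r\le i\le r+\delta$; (ii) there exist nonnegative integers $t,\delta^*$ with $t+\delta^*\le d$ such that for $0\le i\le d$, $e_iV\ne0$ if and only if $t\le i\le t+\delta^*$.
   Context: $\mathbb{F}$ is a field, $d\ge0$, and $\{\theta_i\}_{i=0}^d$, $\{\theta^*_i\}_{i=0}^d$ are scalars in $\mathbb{F}$ with $\theta_i\ne\theta_j$, $\theta^*_i\ne\theta^*_j$ for $i\ne j$, such that $\frac{\theta_{i-2}-\theta_{i+1}}{\theta_{i-1}-\theta_i}$ and $\frac{\theta^*_{i-2}-\theta^*_{i+1}}{\theta^*_{i-1}-\theta^*_i}$ are equal and independent of $i$ for $2\le i\le d-1$. $T$ is the associative $\mathbb{F}$-algebra with $1$ generated by $a,e_0,\dots,e_d,a^*,e^*_0,\dots,e^*_d$ with relations $e_ie_j=\delta_{ij}e_i$, $e^*_ie^*_j=\delta_{ij}e^*_i$, $\sum_ie_i=\sum_ie^*_i=1$, $a=\sum_i\theta_ie_i$, $a^*=\sum_i\theta^*_ie^*_i$, and $e^*_ia^ke^*_j=0$, $e_i{a^*}^ke_j=0$ whenever $0\le i,j,k\le d$ and $k<|i-j|$. *)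

(* Defs.v *)
From HB Require Import structures.
From mathcomp Require Import all_boot all_order all_algebra.
Set Implicit Arguments.
Unset Strict Implicit.
Unset Printing Implicit Defensive.
Import Order.TTheory GRing.Theory Num.Theory.
Local Open Scope ring_scope.

Section TModule.
Variables (F : fieldType) (vT : vectType F).

Definition epow (A : 'End(vT)) (k : nat) : 'End(vT) :=
  iter k (fun g => (A \o g)%VF) \1%VF.

Definition invariant (U : {vspace vT}) (f : 'End(vT)) : bool :=
  (f @: U <= U)%VS.

(* The action of the generators a, e_0..e_d, a*, e*_0..e*_d of T on V
   (algebra product xy acts as composition x \o y) satisfies the
   defining relations of T. *)
Definition T_relations (d : nat) (theta thetas : nat -> F)
  (A : 'End(vT)) (E : nat -> 'End(vT))
  (As : 'End(vT)) (Es : nat -> 'End(vT)) : Prop :=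
  [/\ (forall i j, (i <= d)%N -> (j <= d)%N ->
         (E i \o E j)%VF = if i == j then E i else 0),
      (forall i j, (i <= d)%N -> (j <= d)%N ->
         (Es i \o Es j)%VF = if i == j then Es i else 0),
      \sum_(i < d.+1) E i = \1%VF /\ \sum_(i < d.+1) Es i = \1%VF,
      A = \sum_(i < d.+1) theta i *: E i /\
      As = \sum_(i < d.+1) thetas i *: Es i &
      (forall i j k, (i <= d)%N -> (j <= d)%N -> (k <= d)%N ->
         (k < `|(i : int) - (j : int)|)%N ->
         (Es i \o epow A k \o Es j)%VF = 0 /\
         (E i \o epow As k \o E j)%VF = 0)].

(* V is an irreducible T-module: V <> 0 and the only subspaces invariant
   under all generators (= the T-submodules) are 0 and V. *)
Definition T_irreducible (d : nat)
  (A : 'End(vT)) (E : nat -> 'End(vT))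
  (As : 'End(vT)) (Es : nat -> 'End(vT)) : Prop :=
  fullv != (0%VS : {vspace vT}) /\
  forall U : {vspace vT},
    invariant U A -> invariant U As ->
    (forall i, (i <= d)%N -> invariant U (E i) && invariant U (Es i)) ->
    U = 0%VS \/ U = fullv.

End TModule.

(* Main.v *)
Require Import Defs.
From HB Require Import structures.
From mathcomp Require Import all_boot all_order all_algebra.
From mathcomp Require Import zify.
Import Order.TTheory GRing.Theory Num.Theory.
Local Open Scope ring_scope.
Set Implicit Arguments.
Unset Strict Implicit.

Lemma img_nz (F : fieldType) (vT : vectType F) (f : 'End(vT)) :
  ((f @: fullv)%VS != 0%VS) <-> (f != 0).
Proof.
split.
  apply: contra => /eqP ->; by rewrite lim0g.
apply: contra => /eqP H; apply/eqP/lfunP => u.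
rewrite zero_lfunE; apply/eqP; rewrite -memv0 -H; exact: memv_img (memvf u).
Qed.

Lemma sum_id (F : fieldType) (vT : vectType F) d (E : nat -> 'End(vT))
  (H : \sum_(i < d.+1) E i = \1%VF) v : v = \sum_(i < d.+1) E i v.
Proof. by rewrite -sum_lfunE H id_lfunE. Qed.

Lemma AE_lem (F : fieldType) (vT : vectType F) d (theta : nat -> F)
  (A : 'End(vT)) (E : nat -> 'End(vT))
  (HEE : forall i j, (i <= d)%N -> (j <= d)%N ->
         (E i \o E j)%VF = if i == j then E i else 0)
  (HA : A = \sum_(i < d.+1) theta i *: E i) i v :
  (i <= d)%N -> A (E i v) = theta i *: E i v.
Proof.
move=> hi; rewrite HA sum_lfunE (bigD1 (inord i)) //= big1 ?addr0.
  by rewrite scale_lfunE -comp_lfunE HEE ?inordK ?eqxx.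
move=> k hk; rewrite scale_lfunE -comp_lfunE HEE //; last by rewrite -ltnS.
case: eqP => [ek|]; last by rewrite zero_lfunE scaler0.
by move: hk; rewrite -(inj_eq val_inj) /= inordK // ek eqxx.
Qed.

Lemma memv_eq (F : fieldType) (vT : vectType F) (U : {vspace vT}) x y :
  x \in U -> x = y -> y \in U.
Proof. by move=> H <-. Qed.

Lemma interp (F : fieldType) (vT : vectType F) d (theta : nat -> F)
  (Htheta : forall i j, (i <= d)%N -> (j <= d)%N -> i != j -> theta i != theta j)
  (A : 'End(vT)) (E : nat -> 'End(vT))
  (HEE : forall i j, (i <= d)%N -> (j <= d)%N ->
         (E i \o E j)%VF = if i == j then E i else 0)
  (HsumE : \sum_(i < d.+1) E i = \1%VF)
  (HA : A = \sum_(i < d.+1) theta i *: E i)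
  (U : {vspace vT}) (HU : forall v, v \in U -> A v \in U) j v :
  (j <= d)%N -> v \in U -> E j v \in U.
Proof.
move=> hj hv.
have key : forall m, (m <= d.+1)%N -> \sum_(i < d.+1)
   (\prod_(0 <= k < m | k != j) (theta i - theta k)) *: E i v \in U.
  elim=> [_|m IH hm].
    under eq_bigr do rewrite big_geq // scale1r.
    by rewrite -sum_id.
  under eq_bigr => i _ do rewrite big_mkcond big_nat_recr //= -big_mkcond.
  have IH' := IH (ltnW hm).
  case: (eqVneq m j) => [emj|nmj].
    rewrite emj in IH' *.
    under eq_bigr do rewrite ?eqxx /= mulr1.
    exact: IH'.
  under eq_bigr do rewrite /=.
  have := memvB (HU _ IH') (memvZ (theta m) IH').
  move/memv_eq; apply.
  rewrite linear_sum scaler_sumr -sumrB; apply: eq_bigr => i _.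
  rewrite linearZ /= (AE_lem HEE HA) ?(ltnSE (ltn_ord i)) //.
  by rewrite !scalerA -scalerBl mulrBr [theta m * _]mulrC.
have := key d.+1 (leqnn _).
rewrite (bigD1 (inord j)) //= [X in _ + X]big1 ?addr0 => [|i hi]; last first.
  apply/eqP; rewrite scaler_eq0; apply/orP; left.
  rewrite prodf_seq_eq0; apply/hasP; exists (val i).
    by rewrite mem_iota /= add0n ltn_ord.
  rewrite subrr eqxx andbT; apply: contra hi => /eqP hij.
  by apply/eqP/val_inj; rewrite /= inordK // -hij.
rewrite inordK //.
set c := \prod_(_ <= _ < _ | _) _.
have cnz : c != 0.
  rewrite /c prodf_seq_eq0; apply/hasPn => k; rewrite mem_iota add0n /= => hk.
  apply/nandP; case: (eqVneq k j) => [->|nkj]; [by left | right].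
  by rewrite subr_eq0 eq_sym Htheta // eq_sym.
by move=> H; rewrite -(scalerK cnz (E j v)); apply: memvZ.
Qed.

Lemma inv_of (F : fieldType) (vT : vectType F) (U : {vspace vT}) (f : 'End(vT)) :
  (forall x, x \in U -> f x \in U) -> Defs.invariant U f.
Proof. by move=> H; apply/subvP => y /memv_imgP [x hx ->]; apply: H. Qed.

Lemma gap (F : fieldType) (vT : vectType F) d (theta thetas : nat -> F)
  (Htheta : forall i j, (i <= d)%N -> (j <= d)%N -> i != j -> theta i != theta j)
  (A : 'End(vT)) (E : nat -> 'End(vT)) (As : 'End(vT)) (Es : nat -> 'End(vT))
  (HT : T_relations d theta thetas A E As Es)
  (Hirr : T_irreducible d A E As Es) i j k :
  (i < j)%N -> (j < k)%N -> (k <= d)%N -> Es i != 0 -> Es k != 0 -> Es j != 0.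
Proof.
case: HT => HEE HEsEs [HsumE HsumEs] [HA HAs] Htri.
case: Hirr => Hnz Hirr.
move=> hij hjk hkd /lfunPn [u hu] /lfunPn [w hw]; apply/negP => /eqP Esj0.
rewrite zero_lfunE in hu hw.
have hjd : (j <= d)%N by apply: ltnW (leq_trans hjk hkd).
have Esj0' : forall y, Es j y = 0 by move=> y; rewrite Esj0 zero_lfunE.
pose W := ((\sum_(l < d.+1 | (l < j)%N) Es l) @: fullv)%VS.
have memW : forall x, x \in W <-> forall m, (m <= d)%N -> (j <= m)%N -> Es m x = 0.
  move=> x; split.
    case/memv_imgP => y _ -> m hm hjm.
    rewrite sum_lfunE linear_sum big1 // => l hl.
    transitivity ((Es m \o Es l)%VF y); first by rewrite comp_lfunE.
    rewrite HEsEs //; last by rewrite -ltnS.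
    case: eqP => [eml|]; last by rewrite zero_lfunE.
    by move: hl; rewrite -eml ltnNge hjm.
  move=> H; apply/memv_imgP; exists x; first exact: memvf.
  rewrite sum_lfunE; apply: etrans (sum_id HsumEs x) _.
  rewrite [RHS]big_mkcond; apply: eq_bigr => l _; case: ifP => // hl.
  by apply: H; [rewrite -ltnS | rewrite leqNgt hl].
have WA : forall x, x \in W -> A x \in W.
  move=> x /memW Hx; apply/memW => m hm hjm.
  rewrite (sum_id HsumEs x) !linear_sum big1 // => l _.
  have hl : (l <= d)%N by rewrite -ltnS.
  case: (ltnP l j) => hlj; last by rewrite Hx // !linear0.
  case: (eqVneq m j) => [->|nmj]; first by apply: Esj0'.
  have hml : (l < m)%N by lia.
  have [H _] := Htri m l 1 hm hl ltac:(lia) ltac:(rewrite distnEl; lia).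
  transitivity ((Es m \o epow A 1 \o Es l)%VF x).
    by rewrite /epow /= !comp_lfunE id_lfunE.
  by rewrite H zero_lfunE.
have hid : (i <= d)%N by lia.
have WEs : forall k' x, (k' <= d)%N -> x \in W -> Es k' x \in W.
  move=> k' x hk' /memW Hx; apply/memW => m hm hjm.
  transitivity ((Es m \o Es k')%VF x); first by rewrite comp_lfunE.
  rewrite HEsEs //; case: eqP => [emk|_]; last by rewrite zero_lfunE.
  exact: Hx.
have WAs : forall x, x \in W -> As x \in W.
  move=> x /memW Hx; apply/memW => m hm hjm.
  rewrite HAs sum_lfunE linear_sum big1 // => l _.
  have hl : (l <= d)%N by rewrite -ltnS.
  transitivity (thetas l *: (Es m \o Es l)%VF x).
    by rewrite scale_lfunE linearZ /= comp_lfunE.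
  rewrite HEsEs //; case: eqP => [eml|_]; last by rewrite zero_lfunE scaler0.
  by rewrite -eml Hx // scaler0.
have WE : forall k' x, (k' <= d)%N -> x \in W -> E k' x \in W.
  by move=> k' x hk' hx; apply: (interp Htheta HEE HsumE HA WA).
have [W0|Wf] := Hirr W (inv_of WA) (inv_of WAs)
  (fun k' hk' => introT andP (conj (inv_of (WE k' ^~ hk')) (inv_of (WEs k' ^~ hk')))).
  have : Es i u \in W.
    apply/memW => m hm hjm.
    transitivity ((Es m \o Es i)%VF u); first by rewrite comp_lfunE.
    rewrite HEsEs //; case: eqP => [emi|]; last by rewrite zero_lfunE.
    lia.
  by rewrite W0 memv0 (negbTE hu).
have : w \in W by rewrite Wf memvf.
move/memW => /(_ k hkd (ltnW hjk)) H.
by move: hw; rewrite H zero_lfunE eqxx.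
Qed.

Lemma part (F : fieldType) (vT : vectType F) d (theta thetas : nat -> F)
  (Htheta : forall i j, (i <= d)%N -> (j <= d)%N -> i != j -> theta i != theta j)
  (A : 'End(vT)) (E : nat -> 'End(vT)) (As : 'End(vT)) (Es : nat -> 'End(vT))
  (HT : T_relations d theta thetas A E As Es)
  (Hirr : T_irreducible d A E As Es) :
  exists r delta : nat, (r + delta <= d)%N /\
     forall i, (i <= d)%N ->
       ((Es i @: fullv)%VS != 0%VS <-> (r <= i <= r + delta)%N).
Proof.
have Hg := gap Htheta HT Hirr.
case: HT => _ _ [_ HsumEs] _ _; case: Hirr => Hnz _.
pose P := fun i => (i <= d)%N && (Es i != 0).
have exP : exists i, P i.
  have : \sum_(i < d.+1) Es i != 0.
    rewrite HsumEs; apply: contra Hnz => /eqP h.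
    by rewrite -(lim1g fullv) h lim0g.
  case/boolP: [exists i : 'I_d.+1, Es i != 0] => [/existsP [i hi]|/existsPn H].
    by exists i; rewrite /P hi -ltnS ltn_ord.
  rewrite big1 ?eqxx // => i _; apply/eqP; move: (H i); by rewrite negbK.
have ubP : forall i, P i -> (i <= d)%N by move=> i /andP[].
case: (ex_minnP exP) => r /andP[hr Er] minr.
case: (ex_maxnP exP ubP) => M /andP[hM EM] maxM.
have hrM : (r <= M)%N by apply: minr; rewrite /P hM EM.
exists r, (M - r)%N; split; first lia.
move=> i hi; rewrite img_nz; split.
  move=> Ei; have Pi : P i by rewrite /P hi Ei.
  have := minr i Pi; have := maxM i Pi => h1 h2.
  by apply/andP; split; lia.
case/andP => h1 h2.
case: (ltngtP r i) => [ri|ir|<-] //; last by lia.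
case: (ltngtP i M) => [iM|Mi|->] //; last by lia.
exact: Hg ri iM hM Er EM.
Qed.

Lemma swapT (F : fieldType) (vT : vectType F) d (theta thetas : nat -> F)
  (A : 'End(vT)) (E : nat -> 'End(vT)) (As : 'End(vT)) (Es : nat -> 'End(vT)) :
  T_relations d theta thetas A E As Es -> T_relations d thetas theta As Es A E.
Proof.
case=> h1 h2 [h3 h4] [h5 h6] h7; split => //.
by move=> i j k hi hj hk hijk; have [? ?] := h7 i j k hi hj hk hijk.
Qed.

Lemma swapI (F : fieldType) (vT : vectType F) d
  (A : 'End(vT)) (E : nat -> 'End(vT)) (As : 'End(vT)) (Es : nat -> 'End(vT)) :
  T_irreducible d A E As Es -> T_irreducible d As Es A E.
Proof.
case=> h1 h2; split => // U hA hAs hE; apply: h2 => // i hi.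
by rewrite andbC; apply: hE.
Qed.

Unset Implicit Arguments.
Set Strict Implicit.

Theorem lemma5p3 (F : fieldType) (d : nat) (theta thetas : nat -> F)
  (Htheta : forall i j, (i <= d)%N -> (j <= d)%N -> i != j -> theta i != theta j)
  (Hthetas : forall i j, (i <= d)%N -> (j <= d)%N -> i != j -> thetas i != thetas j)
  (Hrec : exists beta : F, forall i, (2 <= i)%N -> (i <= d.-1)%N ->
      (theta (i - 2)%N - theta i.+1) / (theta i.-1 - theta i) = beta /\
      (thetas (i - 2)%N - thetas i.+1) / (thetas i.-1 - thetas i) = beta)
  (vT : vectType F) (A : 'End(vT)) (E : nat -> 'End(vT))
  (As : 'End(vT)) (Es : nat -> 'End(vT))
  (HT : T_relations d theta thetas A E As Es)
  (Hirr : T_irreducible d A E As Es) :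
  (exists r delta : nat, (r + delta <= d)%N /\
     forall i, (i <= d)%N ->
       ((Es i @: fullv)%VS != 0%VS <-> (r <= i <= r + delta)%N)) /\
  (exists t deltas : nat, (t + deltas <= d)%N /\
     forall i, (i <= d)%N ->
       ((E i @: fullv)%VS != 0%VS <-> (t <= i <= t + deltas)%N)).
Proof.
split; first exact: (part Htheta HT Hirr).
exact: (part Hthetas (swapT HT) (swapI Hirr)).
Qed.
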